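(* For the multiplicative monoids of real and complex numbers, $$\mathrm{Rec}((\mathbb{R}, \times, 1)) = \{\emptyset, \{0\}, \mathbb{R}_{<0}, \mathbb{R}_{\le 0}, \mathbb{R}_{>0}, \mathbb{R}_{\ge 0}, \mathbb{R} \setminus \{0\}, \mathbb{R}\}$$ and $$\mathrm{Rec}((\mathbb{C}, \times, 1)) = \{\emptyset, \{0\}, \mathbb{C} \setminus \{0\}, \mathbb{C}\}.$$
   Context: A subset $S$ of a monoid $M$ is recognizable if there exist a finite monoid $N$, a monoid morphism $\varphi\colon M \to N$ and a subset $T \subseteq N$ with $S = \varphi^{-1}(T)$; $\mathrm{Rec}(M)$ denotes the set of recognizable subsets of $M$. *)

(* Defs.v *)
From HB Require Import structures.
From mathcomp Require Import all_boot all_order all_algebra.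
From mathcomp Require Import boolp classical_sets reals.
From mathcomp.real_closed Require Import complex.
Set Implicit Arguments. Unset Strict Implicit. Unset Printing Implicit Defensive.
Import Order.TTheory GRing.Theory Num.Theory.
Local Open Scope classical_set_scope.

Definition recognizable (M : Type) (mul : M -> M -> M) (one : M)
    (S : set M) : Prop :=
  exists (N : finType) (op : N -> N -> N) (e : N) (phi : M -> N) (T : set N),
    [/\ associative op, left_id e op & right_id e op] /\
    [/\ phi one = e,
        (forall x y, phi (mul x y) = op (phi x) (phi y))
      & S = phi @^-1` T].

(* Main.v *)
Require Import Defs.
From HB Require Import structures.
From mathcomp Require Import all_boot all_order all_algebra.
From mathcomp Require Import boolp classical_sets reals.
From mathcomp.real_closed Require Import complex.
From mathcomp Require Import lra.
Import Order.TTheory GRing.Theory Num.Theory.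
Local Open Scope classical_set_scope.
Local Open Scope ring_scope.


Section Gen.
Variables (N : finType) (op : N -> N -> N) (e : N).
Hypotheses (opA : associative op) (op1 : left_id e op) (opr1 : right_id e op).

Definition pw u k := iter k (op u) e.

Lemma pwD u a b : pw u (a + b) = op (pw u a) (pw u b).
Proof. elim: a => [|a IH]; first by rewrite add0n /= op1.
rewrite addSn /=. rewrite -/(pw u (a+b)) IH opA //. Qed.

Lemma pwSr u k : pw u k.+1 = op (pw u k) u.
Proof. by rewrite -addn1 pwD /= opr1. Qed.

Lemma pw_inv u v i : op u v = e -> op (pw u i) (pw v i) = e.
Proof.
move=> uv; elim: i => [|i IH]; first by rewrite /= op1.
rewrite pwSr /= -/(pw v i) -opA (opA u) uv op1 //.
Qed.

Lemma pw_mul u d m : pw u d = e -> pw u (d * m) = e.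
Proof. move=> h; elim: m => [|m IH]; first by rewrite muln0. by rewrite mulnS pwD h IH op1. Qed.

Lemma pw_fact u v : op u v = e -> pw u ((#|N|)`!) = e.
Proof.
move=> uv.
pose f := fun i : 'I_(S #|N| ) => pw u i.
have: ~~ injectiveb f.
  apply/negP => /injectiveP /leq_card; by rewrite card_ord ltnn.
case/injectivePn => i [j ij fij].
have [d [d0 dn hd]] : exists d, [/\ (0 < d)%N, (d <= #|N|)%N & pw u d = e].
  wlog lij : i j ij fij / (i < j)%N.
    move=> H; case: (ltngtP i j) => h; first exact: (H i j).
      by apply: (H j i) => //; rewrite eq_sym.
    by move/val_inj: h ij => ->; rewrite eqxx.
  exists (j - i)%N; split.
  - by rewrite subn_gt0.
  - by rewrite (leq_trans (leq_subr _ _)) // -ltnS.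
  have H := @pw_inv u v i uv. rewrite /f /= in fij. rewrite fij in H.
  have ej : (j : nat) = ((j - i) + i)%N by rewrite subnK // ltnW.
  by rewrite ej pwD -opA (@pw_inv u v i uv) opr1 in H.
have /dvdnP [k ->] : (d %| (#|N|)`!)%N by rewrite dvdn_fact // d0.
by rewrite mulnC pw_mul.
Qed.
End Gen.

Lemma unit_pow (F : fieldType) (N : finType) (op : N -> N -> N) e (phi : F -> N) :
  associative op -> left_id e op -> right_id e op ->
  phi 1 = e -> (forall x y, phi (x * y) = op (phi x) (phi y)) ->
  forall y, y != 0 -> phi (y ^+ (#|N|)`!) = e.
Proof.
move=> opA op1 opr1 p1 pM y y0.
have pX k : phi (y ^+ k) = @pw N op e (phi y) k.
  elim: k => [|k IH]; first by rewrite expr0.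
  by rewrite exprS pM IH.
rewrite pX; apply: (@pw_fact N op e opA op1 opr1 _ (phi y^-1)).
by rewrite -pM mulfV.
Qed.

Lemma real_root (R : realType) (x : R) (n : nat) : 0 < x -> (0 < n)%N ->
  exists y : R, y != 0 /\ y ^+ n = x.
Proof.
move=> x0 n0.
have h01 : 0 <= 1 + x by lra.
have hp : ('X^n - x%:P).[0] <= 0 <= ('X^n - x%:P).[1 + x].
  rewrite !hornerE expr0n eqn0Ngt n0 /= sub0r oppr_le0 (ltW x0) /=.
  rewrite subr_ge0 (le_trans _ (ler_eXnr n0 _)); lra.
have [y _ ry] := @Num.poly_ivt R ('X^n - x%:P) 0 (1 + x) h01 hp.
exists y; move: ry; rewrite /root !hornerE subr_eq0 => /eqP yx; split => //.
  by apply/negP => /eqP y0; move: yx; rewrite y0 expr0n eqn0Ngt n0 /= => x00; lra.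
Qed.

Section Real.
Variable R : realType.

Definition sgR (x : R) : option bool := if x == 0 then None else Some (0 < x).
Definition opR (a b : option bool) :=
  match a, b with Some x, Some y => Some (x == y) | _, _ => None end.
Definition Pb (b0 bp bn : bool) (o : option bool) : bool :=
  match o with None => b0 | Some true => bp | Some false => bn end.
Definition FR b0 bp bn : set R := [set x | Pb b0 bp bn (sgR x)].

Lemma sgR_pos x : 0 < x -> sgR x = Some true.
Proof. by move=> h; rewrite /sgR gt_eqF // h. Qed.
Lemma sgR_neg x : x < 0 -> sgR x = Some false.
Proof. by move=> h; rewrite /sgR lt_eqF // ltNge ltW. Qed.
Arguments sgR_pos [x]. Arguments sgR_neg [x].
Lemma sgR0 : sgR 0 = None.
Proof. by rewrite /sgR eqxx. Qed.

Lemma sgRM x y : sgR (x * y) = opR (sgR x) (sgR y).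
Proof.
have [->|x0] := eqVneq x 0; first by rewrite mul0r sgR0.
have [->|y0] := eqVneq y 0; first by rewrite mulr0 sgR0; case: (sgR x).
case: (ltrgtP x 0) => hx; last by rewrite hx eqxx in x0.
- case: (ltrgtP y 0) => hy; last by rewrite hy eqxx in y0.
  + by rewrite (sgR_neg hx) (sgR_neg hy) sgR_pos //; nra.
  + by rewrite (sgR_neg hx) (sgR_pos hy) sgR_neg //; nra.
- case: (ltrgtP y 0) => hy; last by rewrite hy eqxx in y0.
  + by rewrite (sgR_pos hx) (sgR_neg hy) sgR_neg //; nra.
  + by rewrite (sgR_pos hx) (sgR_pos hy) sgR_pos //; nra.
Qed.

Lemma rec_FR (S : set R) :
  recognizable (fun x y : R => x * y) 1 S <-> exists b0 bp bn, S = FR b0 bp bn.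
Proof.
split.
- move=> [N [op [e [phi [T [[opA op1 opr1] [p1 pM ->]]]]]]].
  have ppos x : 0 < x -> phi x = e.
    move=> x0; have [y [y0 <-]] := @real_root R x _ x0 (fact_gt0 #|N|).
    exact: (@unit_pow R N op e phi opA op1 opr1 p1 pM y y0).
  have pneg x : x < 0 -> phi x = phi (-1).
    move=> x0; have -> : x = -1 * - x by rewrite mulN1r opprK.
    by rewrite pM (ppos (- x)) ?opr1 // oppr_gt0.
  exists `[< T (phi 0) >], `[< T e >], `[< T (phi (-1)) >].
  apply/funext => x; apply/propext; rewrite /FR /preimage /=.
  case: (ltrgtP x 0) => hx.
  + by rewrite sgR_neg //= asboolE pneg.
  + by rewrite sgR_pos //= asboolE ppos.
  + by rewrite hx sgR0 /= asboolE.
- move=> [b0 [bp [bn ->]]].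
  exists (option bool : finType), opR, (Some true), sgR, [set o | Pb b0 bp bn o].
  split; first split.
  + by case=> [[]|] [[]|] [[]|].
  + by case=> [[]|].
  + by case=> [[]|].
  split => //; first by rewrite sgR_pos.
  exact: sgRM.
Qed.

Lemma FR_eq (b0 bp bn : bool) (P : R -> Prop) :
  (forall x, x < 0 -> (P x <-> bn)) -> (P 0 <-> b0) ->
  (forall x, 0 < x -> (P x <-> bp)) -> FR b0 bp bn = [set x | P x].
Proof.
move=> hn h0 hp; apply/funext => x; apply/propext; rewrite /FR /=.
case: (ltrgtP x 0) => hx.
- by rewrite sgR_neg //= hn.
- by rewrite sgR_pos //= hp.
- by rewrite hx sgR0 /= h0.
Qed.

Lemma list_FR (S : set R) :
  (S = set0 \/ S = [set 0] \/ S = [set x | x < 0] \/ S = [set x | x <= 0] \/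
       S = [set x | 0 < x] \/ S = [set x | 0 <= x] \/ S = [set x | x != 0] \/
       S = setT) <-> exists b0 bp bn, S = FR b0 bp bn.
Proof.
have e1 : FR false false false = set0.
  by apply: FR_eq => *; split.
have e2 : FR true false false = [set 0].
  apply: FR_eq => [x hx||x hx]; split => //= h.
  - by move: hx; rewrite h ltxx.
  - by move: hx; rewrite h ltxx.
have e3 : FR false false true = [set x | x < 0].
  by apply: FR_eq => *; split => //; lra.
have e4 : FR true false true = [set x | x <= 0].
  by apply: FR_eq => *; split => //; lra.
have e5 : FR false true false = [set x | 0 < x].
  by apply: FR_eq => *; split => //; lra.
have e6 : FR true true false = [set x | 0 <= x].
  by apply: FR_eq => *; split => //; lra.
have e7 : FR false true true = [set x | x != 0].
  apply: FR_eq => [x hx||x hx].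
  - by split => // _; rewrite lt_eqF.
  - by rewrite /= eqxx.
  - by split => // _; rewrite gt_eqF.
have e8 : FR true true true = setT.
  by apply: FR_eq => *; split.
split.
- case=> [->|[->|[->|[->|[->|[->|[->|->]]]]]]]; do 3 eexists; by eauto.
- move=> [[] [[] [[] ->]]].
  all: rewrite ?e1 ?e2 ?e3 ?e4 ?e5 ?e6 ?e7 ?e8; tauto.
Qed.

End Real.

Section Cplx.
Variable R : realType.

Definition FC (b0 b1 : bool) : set R[i] := [set x | if x == 0 then b0 else b1].

Lemma rec_FC (S : set R[i]) :
  recognizable (fun x y : R[i] => x * y) 1 S <-> exists b0 b1, S = FC b0 b1.
Proof.
split.
- move=> [N [op [e [phi [T [[opA op1 opr1] [p1 pM ->]]]]]]].
  have pnz x : x != 0 -> phi x = e.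
    move=> x0; have M0 := fact_gt0 #|N|.
    rewrite -(rootCK M0 x).
    apply: (@unit_pow _ N op e phi opA op1 opr1 p1 pM).
    by rewrite rootC_eq0.
  exists `[< T (phi 0) >], `[< T e >].
  apply/funext => x; apply/propext; rewrite /FC /preimage /=.
  have [->|x0] := eqVneq x 0; first by rewrite asboolE.
  by rewrite asboolE pnz.
- move=> [b0 [b1 ->]].
  exists bool, orb, false, (fun x : R[i] => x == 0), [set b | if b then b0 else b1].
  split; first split.
  + exact: orbA.
  + by [].
  + exact: orbF.
  split => //; first by rewrite oner_eq0.
  by move=> x y; rewrite mulf_eq0.
Qed.

Lemma list_FC (S : set R[i]) :
  [\/ S = set0, S = [set 0], S = [set x | x != 0] | S = setT] <->
  exists b0 b1, S = FC b0 b1.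
Proof.
have E (b0 b1 : bool) (P : R[i] -> Prop) : (P 0 <-> b0) -> (forall x, x != 0 -> (P x <-> b1)) ->
    FC b0 b1 = [set x | P x].
  move=> h0 h1; apply/funext => x; apply/propext; rewrite /FC /=.
  by have [->|x0] := eqVneq x 0; [rewrite h0 | rewrite h1].
have e1 : FC false false = set0 by apply: E => *; split.
have e2 : FC true false = [set 0].
  apply: E => [|x x0]; split => // h.
  by rewrite h eqxx in x0.
have e3 : FC false true = [set x | x != 0].
  apply: E => [|x x0]; first by rewrite /= eqxx.
  by split.
have e4 : FC true true = setT by apply: E => *; split.
split.
- case=> ->; do 2 eexists; by eauto.
- move=> [[] [[] ->]].
  + by rewrite e4; apply: Or44.
  + by rewrite e2; apply: Or42.
  + by rewrite e3; apply: Or43.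
  + by rewrite e1; apply: Or41.
Qed.
End Cplx.

Theorem mainTheorem6 (R : realType) :
  (forall S : set R,
      recognizable (fun x y : R => x * y) 1 S <->
      (S = set0 \/ S = [set 0] \/ S = [set x | x < 0] \/ S = [set x | x <= 0] \/
       S = [set x | 0 < x] \/ S = [set x | 0 <= x] \/ S = [set x | x != 0] \/
       S = setT)) /\
  (forall S : set R[i],
      recognizable (fun x y : R[i] => x * y) 1 S <->
      [\/ S = set0, S = [set 0], S = [set x | x != 0] | S = setT]).
Proof.
split => S.
- by rewrite rec_FR list_FR.
- by rewrite rec_FC list_FC.
Qed.
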